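(* For every $n\ge 1$, $\mathcal A^{2h}_{n+1}( * )\neq 0$.
   Context: $\mathcal A( * )$ denotes the rational vector space spanned by unitrivalent graphs with vertex orientations at trivalent vertices (univalent vertices are called hairs), modulo the AS and IHX relations; it is graded by degree $=\tfrac12(\text{number of vertices})$, and $\mathcal A_k( * )$ is the degree-$k$ part. $\mathcal A^{2h}_{k}( * )\subset\mathcal A_k( * )$ is the subspace spanned by connected graphs having exactly two hairs, both attached to a single edge of a trivalent graph. *)

(* Defs.v *)
From HB Require Import structures.
From mathcomp Require Import all_boot all_order all_algebra all_fingroup.
Set Implicit Arguments. Unset Strict Implicit. Unset Printing Implicit Defensive.
Import GRing.Theory.
Local Open Scope ring_scope.

(* Unitrivalent graphs with vertex orientations, as combinatorial maps on    *)
(* half-edges.  A raw graph is (m, s, i) with half-edges 'I_m:               *)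
(*  - s : permutation whose cycles are the vertices; a 3-cycle of s is a     *)
(*        trivalent vertex together with its cyclic orientation, a fixed     *)
(*        point of s is a univalent vertex (a hair);                        *)
(*  - i : fixed-point-free involution whose 2-cycles are the edges.          *)
(* Isomorphism of oriented graphs = simultaneous conjugation of (s, i).      *)

Definition Jraw := {m : nat & ({perm 'I_m} * {perm 'I_m})%type}.

Definition mkJ m (s i : {perm 'I_m}) : Jraw := existT _ m (s, i).

Definition validJ (G : Jraw) : bool :=
  let: existT m (s, i) := G in
  [forall x : 'I_m, (s (s (s x)) == x) && (i x != x) && (i (i x) == x)].

Definition samev m (s : {perm 'I_m}) (x y : 'I_m) : bool :=
  y \in [:: x; s x; s (s x)].

Definition nverts (G : Jraw) : nat :=
  let: existT m (s, i) := G in fcard (fun x : 'I_m => s x) 'I_m.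

Definition degreeJ (G : Jraw) : nat := (nverts G)./2.

Definition connectedJ (G : Jraw) : bool :=
  let: existT m (s, i) := G in
  [forall x : 'I_m, forall y : 'I_m,
     connect (fun a b : 'I_m => (b == s a) || (b == i a)) x y].

(* connected, exactly two hairs, both attached to a single edge of the
   trivalent graph obtained by removing the hairs: the two attaching vertices
   are distinct trivalent vertices joined by an edge *)
Definition two_hairs_on_edge (G : Jraw) : bool :=
  let: existT m (s, i) := G in
  [&& connectedJ G,
      #|[set x : 'I_m | s x == x]| == 2 &
      [exists h1 : 'I_m, exists h2 : 'I_m,
        [&& h1 != h2, s h1 == h1, s h2 == h2,
            s (i h1) != i h1, s (i h2) != i h2,
            ~~ samev s (i h1) (i h2) &
            [exists y : 'I_m, exists z : 'I_m,
               [&& samev s (i h1) y, samev s (i h2) z & i y == z]]]]].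

Definition fcomb := seq (rat * Jraw).

Definition coef (l : fcomb) (H : Jraw) : rat :=
  \sum_(p <- l) (if p.2 == H then p.1 else 0).

Inductive relJ : fcomb -> Prop :=
  | rel_iso m (s i pi : {perm 'I_m}) :
      validJ (mkJ s i) ->
      relJ [:: (1, mkJ s i); (-1, mkJ (s ^ pi)%g (i ^ pi)%g)]
  (* AS: reversing the cyclic order at one trivalent vertex changes sign *)
  | rel_AS m (s i : {perm 'I_m}) (x : 'I_m) :
      validJ (mkJ s i) -> s x != x ->
      relJ [:: (1, mkJ s i); (1, mkJ (s ^ tperm (s x) (s (s x)))%g i)]
  (* IHX, in Jacobi form [[a,b],c] + [[b,c],a] + [[c,a],b] = 0 at an edge
     p -- q joining two distinct trivalent vertices (cyclic orders
     (p,p1,p2) and (q,q1,q2)); the legs stay attached to p1, p2, q1, q2 *)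
  | rel_IHX m (s0 s1 s2 i : {perm 'I_m}) (p q : 'I_m) :
      validJ (mkJ s0 i) -> i p = q -> s0 p != p -> s0 q != q ->
      ~~ samev s0 p q ->
      let p1 := s0 p in let p2 := s0 p1 in
      let q1 := s0 q in let q2 := s0 q1 in
      [/\ s1 p = p2, s1 p2 = q1 & s1 q1 = p] -> [/\ s1 q = p1, s1 p1 = q2 & s1 q2 = q] ->
      [/\ s2 p = q1, s2 q1 = p1 & s2 p1 = p] -> [/\ s2 q = p2, s2 p2 = q2 & s2 q2 = q] ->
      (forall x, x \notin [:: p; p1; p2; q; q1; q2] -> s1 x = s0 x /\ s2 x = s0 x) ->
      relJ [:: (1, mkJ s0 i); (1, mkJ s1 i); (1, mkJ s2 i)].

(* v lies in the Q-span of the relations (i.e. v = 0 in A( * )) *)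
Definition in_rel_span (v : Jraw -> rat) : Prop :=
  exists rs : seq (rat * fcomb),
    (forall r, r \in rs -> relJ r.2) /\
    (forall H, v H = \sum_(r <- rs) r.1 * coef r.2 H).

(* A^{2h}_k( * ) <> 0 : some element of the span of the generators is
   nonzero in A( * ) *)
Definition A2h_nonzero (k : nat) : Prop :=
  exists l : fcomb,
    (forall p, p \in l ->
       [/\ validJ p.2, two_hairs_on_edge p.2 & degreeJ p.2 = k]) /\
    ~ in_rel_span (coef l).

(* Main.v *)
Require Import Defs.
From HB Require Import structures.
From mathcomp Require Import all_boot all_order all_algebra all_fingroup.
From mathcomp Require Import zify ring.
Set Implicit Arguments. Unset Strict Implicit. Unset Printing Implicit Defensive.
Import GRing.Theory Num.Theory.
Local Open Scope ring_scope.

Definition eps (a b c : 'I_3) : int :=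
  if [&& a != b, b != c & a != c] then (if ((a.+1 %% 3)%N == b) then 1 else -1) else 0.

Lemma eps_swap a b c : eps a c b = - eps a b c.
Proof.
by case: a => [[|[|[|//]]] ?]; case: b => [[|[|[|//]]] ?]; case: c => [[|[|[|//]]] ?].
Qed.

Lemma eps_rot a b c : eps a b c = eps b c a.
Proof.
by case: a => [[|[|[|//]]] ?]; case: b => [[|[|[|//]]] ?]; case: c => [[|[|[|//]]] ?].
Qed.

Definition edgeF m (i : {perm 'I_m}) (c : {ffun 'I_m -> 'I_3}) (x : 'I_m) : int :=
  if c (i x) == c x then 1 else 0.
Definition vertF m (s : {perm 'I_m}) (c : {ffun 'I_m -> 'I_3}) (x : 'I_m) : int :=
  if s x == x then (if c x == ord0 then 1 else 0) else eps (c x) (c (s x)) (c (s (s x))).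
Definition Fw m (s i : {perm 'I_m}) c x : int := edgeF i c x * vertF s c x.

Definition phiZ (G : Jraw) : int :=
  let: existT m (s, i) := G in
  \sum_(c : {ffun 'I_m -> 'I_3}) \prod_(x : 'I_m) Fw s i c x.

Lemma validP m (s i : {perm 'I_m}) : validJ (mkJ s i) ->
  [/\ forall x, s (s (s x)) = x, forall x, i x != x & forall x, i (i x) = x].
Proof.
move=> /forallP H; split=> x; have /andP[/andP[/eqP h1 h2] /eqP h3] := H x => //.
Qed.

Lemma phi_iso m (s i pi : {perm 'I_m}) :
  phiZ (mkJ (s ^ pi)%g (i ^ pi)%g) = phiZ (mkJ s i).
Proof.
rewrite /= [RHS](reindex_inj (h := fun c : {ffun 'I_m -> 'I_3} => [ffun y => c (pi y)])).
  apply: eq_bigr => c _.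
  rewrite (reindex_inj (@perm_inj _ pi)); apply: eq_bigr => x _.
  rewrite /Fw /edgeF /vertF !ffunE !permJ (inj_eq (@perm_inj _ pi)).
  by case: ifP => //; rewrite !permJ.
move=> c1 c2 E; apply/ffunP => y.
have := congr1 (fun f : {ffun 'I_m -> 'I_3} => f (pi^-1 y)%g) E.
by rewrite !ffunE permKV.
Qed.

Lemma prod_split (T : finType) (A : seq T) (f : T -> int) : uniq A ->
  \prod_x f x = (\prod_(x <- A) f x) * \prod_(x | x \notin A) f x.
Proof.
by move=> uA; rewrite (bigID (fun x => x \in A)) /= -big_uniq.
Qed.

Lemma phi_AS m (s i : {perm 'I_m}) (x : 'I_m) :
  validJ (mkJ s i) -> s x != x ->
  phiZ (mkJ s i) + phiZ (mkJ (s ^ tperm (s x) (s (s x)))%g i) = 0.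
Proof.
move=> /validP[s3 _ _] sx.
set a := x; set b := s a; set d := s b.
have sd : s d = a by rewrite /d /b s3.
have ab : a != b by rewrite eq_sym.
have bd : b != d by apply: contra sx => /eqP/perm_inj/eqP; rewrite eq_sym.
have ad : a != d.
  apply/eqP => E; have : s d = b by rewrite -E.
  by rewrite sd => /eqP; rewrite (negbTE ab).
set t := tperm b d.
have sE y : (s ^ t)%g y = t (s (t y)).
  by rewrite -{1}(tpermK b d y) permJ.
have ta : t a = a by rewrite /t tpermD // eq_sym.
have tb : t b = d by rewrite /t tpermL.
have td : t d = b by rewrite /t tpermR.
have s'a : (s ^ t)%g a = d by rewrite sE ta -/b tb.
have s'd : (s ^ t)%g d = b by rewrite sE td -/d td.
have s'b : (s ^ t)%g b = a by rewrite sE tb sd ta.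
set A := [:: a; b; d].
have uA : uniq A by rewrite /= !inE negb_or ab ad bd.
have clA y : y \notin A -> s y \notin A.
  rewrite !inE; apply: contra => /or3P[] /eqP E.
  - by rewrite -(s3 y) E -/b -/d eqxx !orbT.
  - by rewrite -(s3 y) E sd -/b eqxx.
  - by rewrite -(s3 y) E sd -/b eqxx orbT.
have s'o y : y \notin A -> (s ^ t)%g y = s y.
  move=> yA; have := clA _ yA; rewrite sE !inE !negb_or => /and3P[_ h1 h2].
  move: yA; rewrite !inE !negb_or => /and3P[_ h3 h4].
  by rewrite /t (tpermD (x:=b) (y:=d) (z:=y)) 1?eq_sym // 1?eq_sym // tpermD // eq_sym.
rewrite /=.
suff H : forall c, \prod_y Fw (s ^ t)%g i c y = - \prod_y Fw s i c y.
  by rewrite -big_split /=; apply: big1 => c _; rewrite H addrN.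
move=> c.
rewrite (prod_split _ uA) [in RHS](prod_split _ uA).
have -> : \prod_(y | y \notin A) Fw (s ^ t)%g i c y = \prod_(y | y \notin A) Fw s i c y.
  apply: eq_bigr => y yA; rewrite /Fw /vertF.
  by rewrite s'o // s'o ?clA.
rewrite -mulNr; congr (_ * _).
rewrite !big_cons !big_nil !mulr1 /Fw /vertF s'a s'b s'd.
rewrite s'a s'b -/b -/d sd -/b.
rewrite (eq_sym d a) (negbTE ad) (negbTE ab) (negbTE bd).
rewrite (eq_sym b a) (negbTE ab) (eq_sym d b) (negbTE bd).
rewrite (eps_swap (c a)) (eps_swap (c b)) (eps_swap (c d)).
ring.
Qed.

Definition Tsh m (p q : 'I_m) (e : 'I_3) (c : {ffun 'I_m -> 'I_3}) : {ffun 'I_m -> 'I_3} :=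
  [ffun y => if (y == p) || (y == q) then c y + e else c y].

Lemma Tsh_inj m (p q : 'I_m) e : injective (Tsh p q e).
Proof.
move=> c1 c2 E; apply/ffunP => y.
have := congr1 (fun f : {ffun 'I_m -> 'I_3} => f y) E; rewrite !ffunE.
by case: ifP => // _ /addIr.
Qed.

Lemma phi_IHX m (s0 s1 s2 i : {perm 'I_m}) (p q : 'I_m) :
  validJ (mkJ s0 i) -> i p = q -> s0 p != p -> s0 q != q -> ~~ samev s0 p q ->
  [/\ s1 p = s0 (s0 p), s1 (s0 (s0 p)) = s0 q & s1 (s0 q) = p] ->
  [/\ s1 q = s0 p, s1 (s0 p) = s0 (s0 q) & s1 (s0 (s0 q)) = q] ->
  [/\ s2 p = s0 q, s2 (s0 q) = s0 p & s2 (s0 p) = p] ->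
  [/\ s2 q = s0 (s0 p), s2 (s0 (s0 p)) = s0 (s0 q) & s2 (s0 (s0 q)) = q] ->
  (forall x, x \notin [:: p; s0 p; s0 (s0 p); q; s0 q; s0 (s0 q)] ->
     s1 x = s0 x /\ s2 x = s0 x) ->
  phiZ (mkJ s0 i) + phiZ (mkJ s1 i) + phiZ (mkJ s2 i) = 0.
Proof.
move=> /validP[s3 _ i2] ipq sp sq nsam [h1 h2 h3] [h4 h5 h6] [h7 h8 h9] [h10 h11 h12] hout.
have iqp : i q = p by rewrite -ipq i2.
move: nsam; rewrite /samev !inE !negb_or => /and3P[qp qp1 qp2].
set p1 := s0 p in sp h1 h4 h5 h8 h10 hout qp1 *.
set p2 := s0 p1 in h1 h2 h5 h10 h11 hout qp2 *.
set q1 := s0 q in sq h2 h3 h7 h8 h11 hout *.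
set q2 := s0 q1 in h5 h6 h11 h12 hout *.
have sp2 : s0 p2 = p by rewrite /p2 /p1 s3.
have sq2 : s0 q2 = q by rewrite /q2 /q1 s3.
have inj := @perm_inj _ s0.
have p1p : p1 != p by [].
have p2p : p2 != p by apply/eqP => E; move: sp; rewrite -sp2 E eqxx.
have p2p1 : p2 != p1 by apply/eqP => /inj E; move: sp; rewrite -/p1 E eqxx.
have q1q : q1 != q by [].
have q2q : q2 != q by apply/eqP => E; move: sq; rewrite -sq2 E eqxx.
have q2q1 : q2 != q1 by apply/eqP => /inj E; move: sq; rewrite -/q1 E eqxx.
have q1p : q1 != p by apply/eqP => E; move: qp2; rewrite -sq2 /q2 E -/p1 -/p2 eqxx.
have q1p1 : q1 != p1 by apply/eqP => /inj E; move: qp; rewrite E eqxx.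
have q1p2 : q1 != p2 by apply/eqP => /inj E; move: qp1; rewrite E eqxx.
have q2p : q2 != p by apply/eqP => E; move: qp1; rewrite -sq2 E eqxx.
have q2p1 : q2 != p1 by apply/eqP => E; move: qp2; rewrite -sq2 E eqxx.
have q2p2 : q2 != p2 by apply/eqP => E; move: qp; rewrite -sq2 E sp2 eqxx.
set A := [:: p; p1; p2; q; q1; q2] in hout *.
have p1p' := p1p; rewrite eq_sym in p1p'.
have p2p' := p2p; rewrite eq_sym in p2p'.
have p2p1' := p2p1; rewrite eq_sym in p2p1'.
have q1q' := q1q; rewrite eq_sym in q1q'.
have q2q' := q2q; rewrite eq_sym in q2q'.
have q2q1' := q2q1; rewrite eq_sym in q2q1'.
have q1p' := q1p; rewrite eq_sym in q1p'.
have q1p1' := q1p1; rewrite eq_sym in q1p1'.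
have q1p2' := q1p2; rewrite eq_sym in q1p2'.
have q2p' := q2p; rewrite eq_sym in q2p'.
have q2p1' := q2p1; rewrite eq_sym in q2p1'.
have q2p2' := q2p2; rewrite eq_sym in q2p2'.
have qp' := qp; rewrite eq_sym in qp'.
have qp1' := qp1; rewrite eq_sym in qp1'.
have qp2' := qp2; rewrite eq_sym in qp2'.
have uA : uniq A.
  by rewrite /A /= !inE !negb_or ?p1p ?p1p' ?p2p ?p2p' ?p2p1 ?p2p1' ?q1q ?q1q' ?q2q ?q2q' ?q2q1 ?q2q1' ?q1p ?q1p' ?q1p1 ?q1p1' ?q1p2 ?q1p2' ?q2p ?q2p' ?q2p1 ?q2p1' ?q2p2 ?q2p2' ?qp ?qp' ?qp1 ?qp1' ?qp2 ?qp2'.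
have clA y : y \in A -> s0 y \in A.
  rewrite !inE => /orP[|/orP[|/orP[|/orP[|/orP[]]]]] /eqP->;
     by rewrite ?sp2 ?sq2 eqxx ?orbT.
have nA y : y \notin A -> s0 y \notin A.
  by apply: contra => H; rewrite -(s3 y); do 2 apply: (clA).
have pA z : z \notin A -> (z != p) && (z != q).
  by rewrite !inE !negb_or => /and5P[-> _ _ -> _].
have Fk1 c y : y \notin A -> Fw s1 i c y = Fw s0 i c y.
  move=> yA; have [e1 _] := hout _ yA; have [e1' _] := hout _ (nA _ yA).
  by rewrite /Fw /vertF e1 e1'.
have Fk2 c y : y \notin A -> Fw s2 i c y = Fw s0 i c y.
  move=> yA; have [_ e1] := hout _ yA; have [_ e1'] := hout _ (nA _ yA).
  by rewrite /Fw /vertF e1 e1'.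
have Tout c e y : (y != p) && (y != q) -> Tsh p q e c y = c y.
  by move=> H; rewrite ffunE ifN // negb_or.
have edgeT c e y : edgeF i (Tsh p q e c) y = edgeF i c y.
  rewrite /edgeF !ffunE; case: (boolP ((y == p) || (y == q))) => H.
    have -> : (i y == p) || (i y == q).
      by case/orP: H => /eqP->; rewrite ?ipq ?iqp eqxx ?orbT.
    by rewrite (inj_eq (addIr e)).
  have -> // : ((i y == p) || (i y == q)) = false.
  apply/negbTE; apply: contra H => /orP[/eqP E|/eqP E].
    by rewrite -(i2 y) E ipq eqxx orbT.
  by rewrite -(i2 y) E iqp eqxx.
have vertT c e y : y \notin A -> vertF s0 (Tsh p q e c) y = vertF s0 c y.
  move=> yA; have y1 := nA _ yA; have y2 := nA _ y1.
  by rewrite /vertF !Tout ?pA.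
rewrite /=.
set W := fun c => \prod_x Fw s0 i c x + \prod_x Fw s1 i c x + \prod_x Fw s2 i c x.
have -> : \sum_c \prod_x Fw s0 i c x + \sum_c \prod_x Fw s1 i c x +
          \sum_c \prod_x Fw s2 i c x = \sum_c W c by rewrite /W !big_split.
suff H : (\sum_c W c) *+ 3 = 0 by move/eqP: H; rewrite mulrn_eq0 => /eqP.
have -> : (\sum_c W c) *+ 3 = \sum_(e : 'I_3) \sum_c W c by rewrite sumr_const card_ord.
rewrite (eq_bigr (fun e => \sum_c W (Tsh p q e c))); last first.
  by move=> e _; rewrite (reindex_inj (@Tsh_inj m p q e)).
rewrite exchange_big /=; apply: big1 => c _.
set R := \prod_(x | x \notin A) Fw s0 i c x.
have spl sk c' : (forall y, y \notin A -> Fw sk i c' y = Fw s0 i c y) ->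
    \prod_x Fw sk i c' x = (\prod_(x <- A) Fw sk i c' x) * R.
  by move=> H; rewrite (prod_split _ uA); congr (_ * _); apply: eq_bigr.
have H0 e y : y \notin A -> Fw s0 i (Tsh p q e c) y = Fw s0 i c y.
  by move=> yA; rewrite /Fw edgeT vertT.
have H1 e y : y \notin A -> Fw s1 i (Tsh p q e c) y = Fw s0 i c y.
  by move=> yA; rewrite Fk1 // H0.
have H2 e y : y \notin A -> Fw s2 i (Tsh p q e c) y = Fw s0 i c y.
  by move=> yA; rewrite Fk2 // H0.
rewrite /W; under eq_bigr => e _ do
  rewrite (spl s0 (Tsh p q e c) (H0 e)) (spl s1 (Tsh p q e c) (H1 e)) (spl s2 (Tsh p q e c) (H2 e)).
under eq_bigr => e _ do rewrite -!mulrDl.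
rewrite -big_distrl /=; apply/eqP; rewrite mulf_eq0; apply/orP; left; apply/eqP.
rewrite /Fw.
under eq_bigr => e _ do rewrite !big_split /=.
under eq_bigr => e _ do rewrite (eq_bigr _ (fun x _ => edgeT c e x)).
under eq_bigr => e _ do rewrite -!mulrDr.
rewrite -big_distrr /=.
case: (eqVneq (c q) (c p)) => cqp; last first.
  by rewrite /A big_cons {1}/edgeF ipq (negbTE cqp) !mul0r.
apply/eqP; rewrite mulf_eq0; apply/orP; right; apply/eqP.
under eq_bigr => e _ do rewrite /A !big_cons big_nil !mulr1 /vertF.
under eq_bigr => e _ do rewrite ?big_nil ?mulr1 -/p1 -/p2 -/q1 -/q2 ?sp2 ?sq2 ?h1 ?h2 ?h3 ?h4 ?h5 ?h6 ?h7 ?h8 ?h9 ?h10 ?h11 ?h12 ?h1 ?h2 ?h3 ?h4 ?h5 ?h6 ?h7 ?h8 ?h9 ?h10 ?h11 ?h12 ?h1 ?h2 ?h3 ?h4 ?h5 ?h6 ?h7 ?h8 ?h9 ?h10 ?h11 ?h12.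
under eq_bigr => e _ do rewrite ?(negbTE p1p) ?(negbTE p1p') ?(negbTE p2p) ?(negbTE p2p') ?(negbTE p2p1) ?(negbTE p2p1') ?(negbTE q1q) ?(negbTE q1q') ?(negbTE q2q) ?(negbTE q2q') ?(negbTE q2q1) ?(negbTE q2q1') ?(negbTE q1p) ?(negbTE q1p') ?(negbTE q1p1) ?(negbTE q1p1') ?(negbTE q1p2) ?(negbTE q1p2') ?(negbTE q2p) ?(negbTE q2p') ?(negbTE q2p1) ?(negbTE q2p1') ?(negbTE q2p2) ?(negbTE q2p2') ?(negbTE qp) ?(negbTE qp') ?(negbTE qp1) ?(negbTE qp1') ?(negbTE qp2) ?(negbTE qp2').
under eq_bigr => e _ do rewrite !ffunE !eqxx /= ?(negbTE p1p) ?(negbTE p1p') ?(negbTE p2p) ?(negbTE p2p') ?(negbTE p2p1) ?(negbTE p2p1') ?(negbTE q1q) ?(negbTE q1q') ?(negbTE q2q) ?(negbTE q2q') ?(negbTE q2q1) ?(negbTE q2q1') ?(negbTE q1p) ?(negbTE q1p') ?(negbTE q1p1) ?(negbTE q1p1') ?(negbTE q1p2) ?(negbTE q1p2') ?(negbTE q2p) ?(negbTE q2p') ?(negbTE q2p1) ?(negbTE q2p1') ?(negbTE q2p2) ?(negbTE q2p2') ?(negbTE qp) ?(negbTE qp') ?(negbTE qp1) ?(negbTE qp1') ?(negbTE qp2) ?(negbTE qp2') /= cqp.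
move: (c p) (c p1) (c p2) (c q1) (c q2) => f a b u v.
rewrite !big_ord_recr big_ord0 /=.
by case: f => [[|[|[|//]]] ?]; case: a => [[|[|[|//]]] ?]; case: b => [[|[|[|//]]] ?];
   case: u => [[|[|[|//]]] ?]; case: v => [[|[|[|//]]] ?].
Qed.

Local Close Scope ring_scope.

Definition Sn (N x : nat) : nat :=
  if x < 6 * N then (if x %% 3 == 2 then x - 2 else x + 1) else x.

Definition In (N x : nat) : nat :=
  if x < 6 * N then
    (if x %% 6 == 0 then (if x == 0 then 6 * N - 3 else x - 3)
     else if x %% 6 == 3 then (if x + 3 == 6 * N then 0 else x + 3)
     else if x %% 6 == 1 then x + 3
     else if x %% 6 == 4 then x - 3
     else if x %% 6 == 2 then (if x == 2 then 6 * N else x + 3)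
     else (if x == 5 then 6 * N + 1 else x - 3))
  else if x == 6 * N then 2 else 5.

Ltac splitif := repeat (match goal with |- context[if ?b then _ else _] =>
    lazymatch b with context[if _ then _ else _] => fail | _ => case: (boolP b) => ? end end).

Lemma Sn_lt N x : 0 < N -> x < (6 * N).+2 -> Sn N x < (6 * N).+2.
Proof. move=> hN hx; rewrite /Sn; splitif; lia. Qed.

Lemma In_lt N x : 0 < N -> x < (6 * N).+2 -> In N x < (6 * N).+2.
Proof. move=> hN hx; rewrite /In; splitif; lia. Qed.

Lemma Sn3 N x : 0 < N -> x < (6 * N).+2 -> Sn N (Sn N (Sn N x)) = x.
Proof. move=> hN hx; rewrite /Sn; splitif; lia. Qed.

Lemma In2 N x : 0 < N -> x < (6 * N).+2 -> In N (In N x) = x.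
Proof. move=> hN hx. Time (rewrite {2}/In; splitif; rewrite /In; splitif; lia). Qed.

Lemma In_neq N x : 0 < N -> x < (6 * N).+2 -> In N x != x.
Proof. move=> hN hx; rewrite /In; splitif; lia. Qed.

Definition MN N := (6 * N.+1).+2.

Definition sf N (x : 'I_(MN N)) : 'I_(MN N) := Ordinal (Sn_lt (ltn0Sn N) (ltn_ord x)).
Definition if_ N (x : 'I_(MN N)) : 'I_(MN N) := Ordinal (In_lt (ltn0Sn N) (ltn_ord x)).

Lemma sf_inj N : injective (@sf N).
Proof.
move=> x y E; apply: val_inj => /=.
rewrite -(Sn3 (ltn0Sn N) (ltn_ord x)) -(Sn3 (ltn0Sn N) (ltn_ord y)).
by have /(congr1 val) /= -> := E.
Qed.

Lemma if_inj N : injective (@if_ N).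
Proof.
move=> x y E; apply: val_inj => /=.
rewrite -(In2 (ltn0Sn N) (ltn_ord x)) -(In2 (ltn0Sn N) (ltn_ord y)).
by have /(congr1 val) /= -> := E.
Qed.

Definition sP N : {perm 'I_(MN N)} := perm (@sf_inj N).
Definition iP N : {perm 'I_(MN N)} := perm (@if_inj N).
Definition GN N : Jraw := mkJ (sP N) (iP N).

Lemma sPE N x : val (sP N x) = Sn N.+1 (val x).
Proof. by rewrite permE. Qed.
Lemma iPE N x : val (iP N x) = In N.+1 (val x).
Proof. by rewrite permE. Qed.

Lemma valid_G N : validJ (GN N).
Proof.
apply/forallP => x; rewrite -!val_eqE /= !sPE !iPE.
by rewrite Sn3 ?In2 ?In_neq ?eqxx // (ltn_ord x).
Qed.

Lemma s_inord N k : k < MN N -> sP N (inord k) = inord (Sn N.+1 k).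
Proof.
move=> hk; apply: val_inj; rewrite sPE /= !inordK //.
exact: Sn_lt.
Qed.

Lemma i_inord N k : k < MN N -> iP N (inord k) = inord (In N.+1 k).
Proof.
move=> hk; apply: val_inj; rewrite iPE /= !inordK //.
exact: In_lt.
Qed.

Lemma conn_rev (T : finType) (s i : T -> T) :
  (forall x, s (s (s x)) = x) -> (forall x, i (i x) = x) ->
  forall x y, connect (fun a b => (b == s a) || (b == i a)) x y ->
              connect (fun a b => (b == s a) || (b == i a)) y x.
Proof.
move=> s3 i2 x y /connectP [p pth ->]; elim: p x pth => [|z p IH] x /=.
  by rewrite connect0.
move=> /andP[exz pth]; apply: connect_trans (IH _ pth) _.
case/orP: exz => /eqP ->.
  rewrite -{2}(s3 x); apply: (@connect_trans _ _ (s (s x))); apply: connect1; by rewrite eqxx.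
apply: connect1; by rewrite i2 eqxx orbT.
Qed.

Section Conn.
Variable N : nat.
Let K := N.+1.
Let e := (fun a b : 'I_(MN N) => (b == sP N a) || (b == iP N a)).
Let r k := connect e (inord 0) (inord k).

Lemma r_step a b : r a -> a < MN N -> b < MN N ->
  (b == Sn K a) || (b == In K a) -> r b.
Proof.
move=> ra ha hb H; apply: connect_trans ra (connect1 _).
rewrite /e s_inord // i_inord //.
by case/orP: H => /eqP->; rewrite eqxx ?orbT.
Qed.

Ltac stp h := apply: (r_step h); rewrite /MN /Sn /In; splitif; lia.

Lemma r_unit j : j < K -> r (6 * j).
Proof.
elim: j => [|j IH] hj; first exact: connect0.
have h0 := IH (ltnW hj). rewrite /K in hj.
have h1 : r (6 * j + 1) by stp h0.
have h4 : r (6 * j + 4) by stp h1.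
have h5 : r (6 * j + 5) by stp h4.
have h3 : r (6 * j + 3) by stp h5.
by stp h3.
Qed.

Lemma r_all k : k < MN N -> r k.
Proof.
move=> hk.
have hu : forall j, j < K -> forall t, t < 6 -> r (6 * j + t).
  move=> j hj t ht; have h0 := r_unit hj; rewrite /K in hj.
  have h1 : r (6 * j + 1) by stp h0.
  have h4 : r (6 * j + 4) by stp h1.
  have h5 : r (6 * j + 5) by stp h4.
  have h3 : r (6 * j + 3) by stp h5.
  have h2 : r (6 * j + 2) by stp h1.
  case: t ht => [|[|[|[|[|[|//]]]]]] _; by rewrite ?addn0.
have h2 : r 2 by have := hu 0 isT 2 isT.
have h5 : r 5 by have := hu 0 isT 5 isT.
have hh1 : r (6 * K) by stp h2.
have hh2 : r (6 * K + 1) by stp h5.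
case: (ltnP k (6 * K)) => hk2.
  have -> : k = 6 * (k %/ 6) + k %% 6 by lia.
  apply: hu; rewrite /K in hk2 *; lia.
have [->|->] : k = 6 * K \/ k = 6 * K + 1 by move: hk hk2; rewrite /MN /K; lia.
  exact: hh1.
exact: hh2.
Qed.
End Conn.

Lemma conn_G N : connectedJ (GN N).
Proof.
apply/forallP => x; apply/forallP => y.
have hx := r_all (ltn_ord x); have hy := r_all (ltn_ord y).
rewrite !inord_val in hx hy.
have [s3 _ i2] := validP (valid_G N).
exact: connect_trans (conn_rev s3 i2 hx) hy.
Qed.

Lemma fcard_cube (T : finType) (s : {perm T}) : (forall x, s (s (s x)) = x) ->
  fcard (fun x => s x) T * 3 = #|[pred x | s x == x]| * 3 + #|[pred x | s x != x]|.
Proof.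
move=> s3.
set f := fun x => s x.
have injf : injective f by apply: perm_inj.
set a := [pred x | s x == x].
have cla : fclosed f a.
  move=> x y /eqP <-; rewrite !inE /f; apply/idP/idP => /eqP E.
    by rewrite !E.
  by rewrite (perm_inj E) eqxx.
have clb : fclosed f [predC a].
  by move=> x y xy; have := cla x y xy; rewrite !inE => ->.
rewrite (n_compC a) mulnDl.
have -> : fcard f a = #|a|.
  rewrite -[RHS](fcard_order_set injf (n:=1)) ?muln1 //.
  apply/subsetP => x; rewrite !inE => /eqP sx.
  apply/eqP; rewrite (@order_cycle _ f [:: x]) //= ?inE ?eqxx //.
  by rewrite /f sx eqxx.
congr (_ + _).
have -> : #|[pred x | s x != x]| = #|[predC a]|.
  by apply: eq_card => x; rewrite !inE.
rewrite (fcard_order_set injf (n:=3)) //.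
apply/subsetP => x; rewrite !inE => sx.
have sxx : s (s x) != x.
  apply: contra sx => /eqP E; apply/eqP; rewrite -{2}E -{1}(s3 x) E.
  done.
have sxsx : s (s x) != s x.
  by apply: contra sx => /eqP/perm_inj ->.
apply/eqP; rewrite (@order_cycle _ f [:: x; s x; s (s x)]) //= ?inE ?eqxx //.
  by rewrite /f s3 eqxx.
by rewrite negb_or eq_sym sx eq_sym sxx eq_sym sxsx.
Qed.

Lemma fixE N (x : 'I_(MN N)) : (sP N x == x) = (6 * N.+1 <= x).
Proof.
rewrite -val_eqE sPE; case: x => v hv /=; rewrite /MN in hv.
rewrite /Sn; splitif; apply/idP/idP; lia.
Qed.

Lemma ineq N a b : a < MN N -> b < MN N ->
  (inord a == inord b :> 'I_(MN N)) = (a == b).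
Proof. by move=> ha hb; rewrite -val_eqE /= !inordK. Qed.

Lemma card_fix N : #|[pred x : 'I_(MN N) | sP N x == x]| = 2.
Proof.
rewrite (eq_card (B := mem ([:: inord (6 * N.+1); inord (6 * N.+1).+1] : seq 'I_(MN N)))).
  rewrite (card_uniqP _) //= inE ineq /MN //; lia.
move=> x; rewrite !inE fixE -!val_eqE /= !inordK /MN //.
case: x => v hv /=; rewrite /MN in hv; apply/idP/orP; lia.
Qed.

Lemma card_nfix N : #|[pred x : 'I_(MN N) | sP N x != x]| = 6 * N.+1.
Proof.
have := cardC [pred x : 'I_(MN N) | sP N x == x]; rewrite card_fix card_ord.
have -> : #|[predC [pred x : 'I_(MN N) | sP N x == x]]| = #|[pred x : 'I_(MN N) | sP N x != x]|.
  by apply: eq_card => x; rewrite !inE.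
rewrite /MN; lia.
Qed.

Lemma nverts_cube m (s i : {perm 'I_m}) : (forall x, s (s (s x)) = x) ->
  nverts (mkJ s i) * 3 = #|[pred x | s x == x]| * 3 + #|[pred x | s x != x]|.
Proof. exact: fcard_cube. Qed.

Lemma degree_G N : degreeJ (GN N) = N.+2.
Proof.
have [s3 _ _] := validP (valid_G N).
have := nverts_cube (iP N) s3; rewrite card_fix card_nfix => H.
rewrite /degreeJ.
have -> : nverts (GN N) = 2 * N.+2 by rewrite /GN; lia.
by rewrite mul2n doubleK.
Qed.

Lemma sval N k v : k < MN N -> Sn N.+1 k = v -> sP N (inord k) = inord v.
Proof. by move=> hk <-; exact: s_inord. Qed.
Lemma ival N k v : k < MN N -> In N.+1 k = v -> iP N (inord k) = inord v.
Proof. by move=> hk <-; exact: i_inord. Qed.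

Ltac cmpv := first [apply: sval | apply: ival]; rewrite /MN ?/Sn ?/In; splitif; lia.

Lemma hairs_G N : two_hairs_on_edge (GN N).
Proof.
rewrite /two_hairs_on_edge /=.
apply/and3P; split; first exact: conn_G.
  by rewrite cardsE card_fix.
have s6 : sP N (inord (6 * N.+1)) = inord (6 * N.+1) by cmpv.
have s7 : sP N (inord (6 * N.+1).+1) = inord (6 * N.+1).+1 by cmpv.
have i6 : iP N (inord (6 * N.+1)) = inord 2 by cmpv.
have i7 : iP N (inord (6 * N.+1).+1) = inord 5 by cmpv.
have s2 : sP N (inord 2) = inord 0 by cmpv.
have s0 : sP N (inord 0) = inord 1 by cmpv.
have s5 : sP N (inord 5) = inord 3 by cmpv.
have s3 : sP N (inord 3) = inord 4 by cmpv.
have i1 : iP N (inord 1) = inord 4 by cmpv.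
apply/existsP; exists (inord (6 * N.+1)); apply/existsP; exists (inord (6 * N.+1).+1).
rewrite /samev !inE s6 s7 i6 i7 s2 s0 s5 s3 !eqxx !ineq /MN //=; try lia.
apply/andP; split; first by rewrite neq_ltn ltnSn.
apply/existsP; exists (inord 1); apply/existsP; exists (inord 4).
by rewrite !inE i1 !eqxx !orbT.
Qed.

Local Open Scope ring_scope.
Import Order.TTheory.

Lemma unit6 (a b d a' : 'I_3) :
  0 <= eps a b d * (eps b d a * (eps d a b * (eps a' b d * (eps b d a' * eps d a' b)))).
Proof.
by case: a => [[|[|[|//]]] ?]; case: b => [[|[|[|//]]] ?]; case: d => [[|[|[|//]]] ?];
   case: a' => [[|[|[|//]]] ?].
Qed.

Lemma eps_cyc (a : nat) : (a < 3)%N ->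
  eps (inord a) (inord ((a + 1) %% 3)) (inord ((a + 2) %% 3)) = 1.
Proof. by case: a => [|[|[|//]]] _; rewrite /eps -!val_eqE /= !inordK. Qed.

Lemma prod6 (g : nat -> int) a :
  \prod_(a <= k < a + 6) g k =
  g a * (g a.+1 * (g a.+2 * (g a.+3 * (g a.+4 * (g a.+4.+1))))).
Proof.
do 6 (rewrite big_ltn; last by lia).
by rewrite big_geq ?mulr1 //; lia.
Qed.

Definition colN (K v : nat) : nat := if (v < 6 * K)%N then ((v + 1) %% 3)%N else 0%N.

Lemma colN_In K v : (0 < K)%N -> (v < (6 * K).+2)%N -> (colN K (In K v) = colN K v)%N.
Proof. move=> hK hv; rewrite /colN /In; splitif; lia. Qed.

Lemma colN_Sn K v : (v < 6 * K)%N -> colN K (Sn K v) = ((colN K v + 1) %% 3)%N.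
Proof. move=> hv; rewrite /colN /Sn; splitif; lia. Qed.

Lemma colN_Sn2 K v : (v < 6 * K)%N -> colN K (Sn K (Sn K v)) = ((colN K v + 2) %% 3)%N.
Proof. move=> hv; rewrite /colN /Sn; splitif; lia. Qed.

Lemma colN_lt K v : (colN K v < 3)%N.
Proof. rewrite /colN; splitif; lia. Qed.

Section Pos.
Variable N : nat.
Local Notation K := N.+1.
Local Notation s := (sP N).
Local Notation i := (iP N).

Definition cstar : {ffun 'I_(MN N) -> 'I_3} := [ffun x : 'I_(MN N) => inord (colN K (val x))].

Lemma term_one : \prod_x Fw s i cstar x = 1.
Proof.
apply: big1 => x _; rewrite /Fw /edgeF /vertF !ffunE iPE colN_In ?eqxx ?mul1r //.
case: (boolP (s x == x)) => hx.
  move: hx; rewrite fixE => hx.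
  rewrite /colN ltnNge hx /=.
  by have -> : inord 0 = ord0 :> 'I_3 by apply: val_inj; rewrite /= inordK.
have hv : (x < 6 * K)%N by move: hx; rewrite fixE -ltnNge.
  rewrite !sPE colN_Sn // colN_Sn2 //.
  exact: eps_cyc (colN_lt _ _).
exact: ltn_ord.
Qed.
Lemma term_ge0 c : 0 <= \prod_x Fw s i c x.
Proof.
case: (boolP [exists x, Fw s i c x == 0]) => [/existsP[x /eqP hx]|/existsPn hnz].
  by rewrite (bigD1 x) //= hx mul0r.
have edgeOK k : (k < MN N)%N -> c (inord (In K k)) = c (inord k).
  move=> hk; have := hnz (inord k); rewrite /Fw /edgeF i_inord //.
  by case: (c (inord (In K k)) =P c (inord k)) => [E _|_]; [exact: E | rewrite mul0r eqxx].
have fixk k : (6 * K <= k < MN N)%N -> s (inord k) == inord k.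
  by case/andP=> h1 h2; rewrite fixE inordK.
have nfixk k : (k < 6 * K)%N -> (s (inord k) == inord k) = false.
  move=> h1; rewrite fixE inordK; first by apply/negbTE; rewrite -ltnNge.
  by rewrite /MN; lia.
have hair k : (6 * K <= k < MN N)%N -> c (inord k) = ord0.
  move=> hk; have := hnz (inord k); rewrite /Fw /vertF fixk //.
  by case: (c (inord k) =P ord0) => [E _|_]; [exact: E | rewrite mulr0 eqxx].
have vertOK k : (k < 6 * K)%N ->
    Fw s i c (inord k) = eps (c (inord k)) (c (inord (Sn K k))) (c (inord (Sn K (Sn K k)))).
  move=> hk; have hk' : (k < MN N)%N by rewrite /MN; lia.
  rewrite /Fw /edgeF i_inord // (edgeOK k hk') eqxx mul1r /vertF nfixk //.
  by rewrite s_inord // s_inord // Sn_lt.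
have -> : \prod_x Fw s i c x = \prod_(0 <= k < MN N) Fw s i c (inord k).
  by rewrite big_mkord; apply: eq_bigr => x _; rewrite inord_val.
rewrite (big_cat_nat _ (n := 6 * K)) //=; last by rewrite /MN; lia.
apply: mulr_ge0; last first.
  rewrite big_nat_cond; apply: prodr_ge0 => k /andP[/andP[hk1 hk2] _].
  rewrite /Fw /edgeF /vertF fixk ?hk1 //.
  by do 2 case: ifP.
have U : forall j, (j <= K)%N -> 0 <= \prod_(0 <= k < 6 * j) Fw s i c (inord k).
  elim=> [|j IH] hj; first by rewrite big_geq.
  rewrite (big_cat_nat _ (n := 6 * j)) //=; last by lia.
  apply: mulr_ge0; first by apply: IH; lia.
  rewrite (_ : (6 * j.+1 = 6 * j + 6)%N); last by lia.
  rewrite prod6 !vertOK; try lia.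
  have S0 : (Sn K (6 * j) = (6 * j).+1)%N by rewrite /Sn; splitif; lia.
  have S1 : (Sn K (6 * j).+1 = (6 * j).+2)%N by rewrite /Sn; splitif; lia.
  have S2 : (Sn K (6 * j).+2 = (6 * j))%N by rewrite /Sn; splitif; lia.
  have S3 : (Sn K (6 * j).+3 = (6 * j).+4)%N by rewrite /Sn; splitif; lia.
  have S4 : (Sn K (6 * j).+4 = (6 * j).+4.+1)%N by rewrite /Sn; splitif; lia.
  have S5 : (Sn K (6 * j).+4.+1 = (6 * j).+3)%N by rewrite /Sn; splitif; lia.
  do 3 rewrite ?S1 ?S2 ?S3 ?S4 ?S5 ?S0.
  have E4 : c (inord ((6 * j)%N).+4) = c (inord ((6 * j)%N).+1) :> 'I_3.
    rewrite -edgeOK /MN; last by lia.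
    by congr (c (inord _)); rewrite /In; splitif; lia.
  have E5 : c (inord ((6 * j)%N).+4.+1) = c (inord ((6 * j)%N).+2) :> 'I_3.
    case: (eqVneq j 0) => [->|j0].
      have h5 : c (inord 5) = ord0.
        rewrite -edgeOK /MN; last by lia.
        by rewrite hair //; rewrite /In /MN; splitif; lia.
      have h2 : c (inord 2) = ord0.
        rewrite -edgeOK /MN; last by lia.
        by rewrite hair //; rewrite /In /MN; splitif; lia.
      by rewrite muln0 h5 h2.
    rewrite -edgeOK /MN; last by lia.
    by congr (c (inord _)); rewrite /In; splitif; lia.
  rewrite E4 E5; exact: unit6.
exact: U.
Qed.
End Pos.

Lemma phi_pos N : 0 < phiZ (GN N).
Proof.
rewrite /phiZ /GN /= (bigD1 (cstar N)) //= term_one.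
have : 0 <= \sum_(c | c != cstar N) \prod_x Fw (sP N) (iP N) c x.
  by apply: sumr_ge0 => c _; apply: term_ge0.
by move=> H; apply: ltr_wpDr.
Qed.

Definition Lphi (l : fcomb) : rat := \sum_(p <- l) p.1 * (phiZ p.2)%:~R.

Lemma rel_L r : relJ r -> Lphi r = 0.
Proof.
case=> [m s i pi V | m s i x V sx | m s0 s1 s2 i p q V ipq sp sq nsam p1 p2 q1 q2 h1 h2 h3 h4 hout].
- by rewrite /Lphi !big_cons big_nil phi_iso /= mul1r mulN1r addr0 addrN.
- by rewrite /Lphi !big_cons big_nil !mul1r addr0 -intrD phi_AS.
- rewrite /Lphi !big_cons big_nil !mul1r addr0 addrA -!intrD.
  have E := phi_IHX V ipq sp sq nsam h1 h2 h3 h4 hout.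
  by rewrite -[LHS]/((phiZ (mkJ s0 i) + phiZ (mkJ s1 i) + phiZ (mkJ s2 i))%:~R) E.
Qed.

Lemma Lphi_coef (l : fcomb) (U : seq Jraw) : uniq U ->
  {subset [seq p.2 | p <- l] <= U} ->
  Lphi l = \sum_(H <- U) coef l H * (phiZ H)%:~R.
Proof.
move=> uU sub; rewrite /Lphi /coef.
under [RHS]eq_bigr => H _ do rewrite big_distrl /=.
rewrite exchange_big /=; apply: eq_big_seq => p pin.
have pU : p.2 \in U by apply: sub; apply: map_f.
rewrite (bigD1_seq p.2) //= eqxx big1 ?addr0 // => H /negbTE.
by rewrite eq_sym => ->; rewrite mul0r.
Qed.

Theorem mainTheorem3 (n : nat) : (1 <= n)%N -> A2h_nonzero n.+1.
Proof.
move=> hn; exists [:: (1, GN n.-1)]; split.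
  move=> p; rewrite inE => /eqP -> /=; split.
  - exact: valid_G.
  - exact: hairs_G.
  - by rewrite degree_G prednK.
move=> [rs [Hr Hv]].
set l : fcomb := [:: (1%R, GN n.-1)].
set U := undup ([seq p.2 | p <- l] ++ flatten [seq [seq p.2 | p <- r.2] | r <- rs]).
have uU : uniq U by apply: undup_uniq.
have L0 : Lphi l = 0.
  rewrite (Lphi_coef uU); last by move=> H Hl; rewrite mem_undup mem_cat Hl.
  under eq_bigr => H _ do rewrite Hv big_distrl /=.
  rewrite exchange_big /=; apply: big1_seq => r /andP[_ rin].
  have <- : r.1 * Lphi r.2 = \sum_(H <- U) r.1 * coef r.2 H * (phiZ H)%:~R.
    rewrite (Lphi_coef uU) ?big_distrr /=; last first.
      move=> H Hr2; rewrite mem_undup mem_cat; apply/orP; right.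
      by apply/flattenP; exists [seq p.2 | p <- r.2] => //; apply: map_f.
    by apply: eq_bigr => H _; rewrite mulrA.
  by rewrite rel_L ?mulr0 //; apply: Hr.
move: L0; rewrite /Lphi big_cons big_nil addr0 mul1r /= => /eqP.
rewrite intr_eq0 => /eqP H.
by have := phi_pos n.-1; rewrite /phiZ /GN /= H ltxx.
Qed.
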